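(* Let $N\ge2$, $n\ge1$, $\tilde J>0$ and $J_i=\tilde J/N^i$ for $1\le i\le n$, and let $0\le m\le n-1$, $1\le s\le N$ be integers. Then the sequence $\{\mathcal H(h^{(m,s)};\gamma_i)\}_{i=0}^{sN^m}$ is symmetric, i.e. $$\mathcal H\big(h^{(m,s)};\gamma_K\big)=\mathcal H\big(h^{(m,s)};\gamma_{sN^m-K}\big)\qquad\text{for all }0\le K\le sN^m.$$
   Context: Hierarchical lattice $\Lambda_N^n=\{1,\dots,N^n\}$; $k$-blocks are $\{jN^k+1,\dots,(j+1)N^k\}$; $d(a,b)$ is the smallest $k\ge0$ with $a,b$ in a common $k$-block. For a field $h$, $\mathcal H(h;\sigma)=-\frac12\sum_{\{v,w\},v\ne w}J_{d(v,w)}\sigma(v)\sigma(w)-\frac h2\sum_v\sigma(v)$ (unordered pairs). $\gamma_k$ is the configuration with $+1$ exactly on $\{1,\dots,k\}$ ($0\le k\le N^n$). $h^{(m,s)}=\tilde J\big[(1-\frac1N)(n-m)-(s-1)\frac1N\big]$. *)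

(* Defs.v *)
From mathcomp Require Import all_boot all_order all_algebra.
Unset Printing Implicit Defensive.
Import Order.TTheory GRing.Theory Num.Theory.
Local Open Scope ring_scope.

(* Sites of the hierarchical lattice Lambda_N^n = {1,...,N^n} are encoded
   0-indexed as v : 'I_(N^n), site number (v+1).  The k-block
   {jN^k+1,...,(j+1)N^k} becomes {jN^k,...,(j+1)N^k - 1}, so two sites share
   a k-block iff  a %/ N^k == b %/ N^k. *)
Definition same_block (N k a b : nat) : bool := (a %/ N ^ k == b %/ N ^ k)%N.

(* d(a,b): the smallest k >= 0 with a, b in a common k-block.  For sites of
   Lambda_N^n, k = n always works, so searching k in 0..n is exhaustive. *)
Definition hdist (N n a b : nat) : nat :=
  find (fun k => same_block N k a b) (iota 0 n.+1).

Definition Jc {R : realFieldType} (Jt : R) (N i : nat) : R := Jt / (N%:R ^+ i).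

(* Hamiltonian H(h; sigma) = -1/2 sum_{unordered pairs {v,w}, v<>w}
   J_{d(v,w)} sigma(v) sigma(w) - h/2 sum_v sigma(v). Unordered pairs are
   enumerated as v < w. *)
Definition Ham {R : realFieldType} (N n : nat) (Jt h : R)
    (sigma : 'I_(N ^ n) -> R) : R :=
  - (1 / 2) * (\sum_(v : 'I_(N ^ n)) \sum_(w : 'I_(N ^ n) | (v < w)%N)
                 Jc Jt N (hdist N n v w) * sigma v * sigma w)
  - h / 2 * (\sum_(v : 'I_(N ^ n)) sigma v).

(* gamma_k: +1 exactly on sites {1,...,k} (0-indexed: v < k), -1 elsewhere. *)
Definition gamma {R : realFieldType} (N n k : nat) : 'I_(N ^ n) -> R :=
  fun v => if (v < k)%N then 1 else -1.

Definition hms {R : realFieldType} (Jt : R) (N n m s : nat) : R :=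
  Jt * ((1 - 1 / N%:R) * (n%:R - m%:R) - (s%:R - 1) / N%:R).

(* Main.v *)
Require Import Defs.
From mathcomp Require Import all_boot all_order all_algebra.
From mathcomp Require Import zify ring lra.
Import Order.TTheory GRing.Theory Num.Theory.
Local Open Scope ring_scope.

Lemma hdistS N n a b : (a %/ N != b %/ N)%N ->
  hdist N n.+1 a b = (hdist N n (a %/ N) (b %/ N)).+1.
Proof.
move=> hab; rewrite /hdist.
have e : iota 0 n.+2 = 0%N :: [seq addn 1 i | i <- iota 0 n.+1].
  by rewrite -(iotaDl 1 0 n.+1).
have hf : same_block N 0 a b = false.
  rewrite /same_block expn0 !divn1; apply/negbTE; apply: contra hab => /eqP -> //.
rewrite e; transitivity (find (fun k => same_block N k a b) [seq addn 1 i | i <- iota 0 n.+1]).+1.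
  by rewrite [LHS]/= hf.
congr S; rewrite find_map; apply: eq_find => j /=.
by rewrite /same_block add1n expnS !divnMA.
Qed.

Lemma hdist1 N n a b : a != b -> (a %/ N == b %/ N)%N -> hdist N n.+1 a b = 1%N.
Proof.
move=> hab h; rewrite /hdist /= /same_block expn0 !divn1 (negbTE hab).
by rewrite expn1 h.
Qed.

Lemma sum_div {R : realFieldType} N a b (F : nat -> R) : (0 < N)%N -> (a <= b)%N ->
  \sum_((a * N)%N <= v < (b * N)%N) F (v %/ N)%N = (\sum_(a <= u < b) F u) *+ N.
Proof.
move=> N0; elim: b => [|b IH] hab.
  have -> : a = 0%N by lia.
  by rewrite !big_geq // mul0rn.
case: (ltngtP a b.+1) hab => // [hlt|->] _; last by rewrite !big_geq // mul0rn.
rewrite ltnS in hlt.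
rewrite (big_cat_nat _ (n:=(b * N)%N)); first last.
- by rewrite leq_mul2r leqnSn orbT.
- by rewrite leq_mul2r hlt orbT.
rewrite IH // big_nat_recr //= mulrnDl; congr (_ + _).
rewrite (eq_big_nat _ _ (F2 := fun _ => F b)) ?sumr_const_nat; first by congr (_ *+ _); rewrite mulSn; lia.
move=> v /andP [h1 h2]; congr F.
have -> : (v = b * N + (v - b * N))%N by lia.
rewrite divnMDl // divn_small ?addn0 //. rewrite mulSn in h2; lia.
Qed.

Definition Asum {R : realFieldType} (Jt : R) N n k :=
  \sum_(0 <= v < k) Jc Jt N (hdist N n v k).
Definition Bsum {R : realFieldType} (Jt : R) N n k :=
  \sum_(k.+1 <= w < (N ^ n)%N) Jc Jt N (hdist N n k w).

Lemma JcS {R : realFieldType} (Jt : R) N i : Jc Jt N i.+1 = Jc Jt N i / N%:R.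
Proof. by rewrite /Jc exprSr invfM mulrA. Qed.

Lemma divn_range N q v : (0 < N)%N -> (q * N <= v < q * N + N)%N -> (v %/ N = q)%N.
Proof.
move=> N0 /andP [h1 h2].
have -> : (v = q * N + (v - q * N))%N by lia.
rewrite divnMDl // divn_small ?addn0 //; lia.
Qed.

Lemma sum_div0 {R : realFieldType} N b (F : nat -> R) : (0 < N)%N ->
  \sum_(0 <= v < (b * N)%N) F (v %/ N)%N = (\sum_(0 <= u < b) F u) *+ N.
Proof. by move=> N0; rewrite -(@sum_div R N 0 b F N0 (leq0n b)) mul0n. Qed.

Lemma A_rec {R : realFieldType} (Jt : R) N n k : (0 < N)%N ->
  Asum Jt N n.+1 k = (k %% N)%:R * (Jt / N%:R) + Asum Jt N n (k %/ N).
Proof.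
move=> N0; set q := (k %/ N)%N.
have hk := divn_eq k N; have hr := ltn_pmod k N0.
rewrite /Asum (big_cat_nat _ (n := (q * N)%N)) //; last by rewrite leq_divM.
rewrite [RHS]addrC; congr (_ + _); last first.
  rewrite (eq_big_nat _ _ (F2 := fun _ => Jt / N%:R)).
    rewrite sumr_const_nat [RHS]mulr_natl; congr (_ *+ _); rewrite /q; lia.
  move=> v hv; rewrite hdist1 ?JcS /Jc ?expr0 ?divr1 //.
    apply/negP => /eqP e; rewrite e in hv; lia.
  rewrite (@divn_range N q v N0) //; rewrite /q; lia.
rewrite (eq_big_nat _ _ (F2 := fun v => Jc Jt N (hdist N n (v %/ N)%N q) / N%:R)).
  rewrite (@sum_div0 R N q (fun u => Jc Jt N (hdist N n u q) / N%:R) N0) -mulr_suml -[_ *+ N]mulr_natr mulfVK // pnatr_eq0 -lt0n N0 //.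
move=> v /andP [_ hv]; rewrite hdistS ?JcS //.
rewrite -/q; have : (v %/ N < q)%N by rewrite ltn_divLR.
by rewrite ltn_neqAle => /andP [].
Qed.

Lemma B_rec {R : realFieldType} (Jt : R) N n k : (0 < N)%N -> (k < N ^ n.+1)%N ->
  Bsum Jt N n.+1 k = (N - 1 - k %% N)%:R * (Jt / N%:R) + Bsum Jt N n (k %/ N).
Proof.
move=> N0 hkn; set q := (k %/ N)%N.
have hk := divn_eq k N; have hr := ltn_pmod k N0.
have hq : (q < N ^ n)%N by rewrite /q ltn_divLR // -expnSr.
rewrite /Bsum expnSr (big_cat_nat _ (n := (q.+1 * N)%N)); first last.
- by rewrite leq_mul2r hq orbT.
- rewrite /q; lia.
congr (_ + _).
  rewrite (eq_big_nat _ _ (F2 := fun _ => Jt / N%:R)).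
    rewrite sumr_const_nat [RHS]mulr_natl; congr (_ *+ _); rewrite /q; lia.
  move=> v hv; rewrite hdist1 ?JcS /Jc ?expr0 ?divr1 //.
    apply/negP => /eqP e; rewrite -e in hv; lia.
  rewrite (@divn_range N q v N0) //; rewrite /q; lia.
rewrite (eq_big_nat _ _ (F2 := fun v => Jc Jt N (hdist N n q (v %/ N)%N) / N%:R)).
  rewrite (@sum_div R N q.+1 (N ^ n)%N (fun u => Jc Jt N (hdist N n q u) / N%:R) N0 hq).
  by rewrite -mulr_suml -[_ *+ N]mulr_natr mulfVK // pnatr_eq0 -lt0n N0.
move=> v /andP [hv _]; rewrite hdistS ?JcS //.
rewrite -/q; have : (q < v %/ N)%N by rewrite leq_divRL.
by rewrite ltn_neqAle => /andP [].
Qed.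

Fixpoint ds (N n k : nat) : nat :=
  match n with 0 => 0%N | n'.+1 => (k %% N + ds N n' (k %/ N))%N end.

Lemma ds0 N n : ds N n 0 = 0%N.
Proof. by elim: n => //= n IH; rewrite mod0n div0n IH. Qed.

Lemma A_ds {R : realFieldType} (Jt : R) N n k : (0 < N)%N -> (k < N ^ n)%N ->
  Asum Jt N n k = (ds N n k)%:R * (Jt / N%:R).
Proof.
move=> N0; elim: n k => [|n IH] k hk.
  have -> : k = 0%N by rewrite expn0 in hk; lia.
  by rewrite /Asum big_geq // mul0r.
rewrite A_rec // IH /=; first by rewrite natrD mulrDl.
by rewrite ltn_divLR // -expnSr.
Qed.

Lemma AB_sum {R : realFieldType} (Jt : R) N n k : (0 < N)%N -> (k < N ^ n)%N ->
  Asum Jt N n k + Bsum Jt N n k = (n * (N - 1))%:R * (Jt / N%:R).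
Proof.
move=> N0; elim: n k => [|n IH] k hk.
  have -> : k = 0%N by rewrite expn0 in hk; lia.
  by rewrite /Asum /Bsum !big_geq // mul0r addr0.
rewrite A_rec // B_rec // addrACA IH; last by rewrite ltn_divLR // -expnSr.
rewrite -mulrDl -natrD -mulrDl -natrD; congr (_%:R * _).
have := ltn_pmod k N0; lia.
Qed.

Lemma ds_small N n k : (0 < n)%N -> (k < N)%N -> ds N n k = k.
Proof.
case: n => // n _ hk /=; by rewrite modn_small // divn_small // ds0 addn0.
Qed.

Lemma ds_sym N m : (0 < N)%N -> forall n k s, (m < n)%N -> (1 <= s <= N)%N ->
  (k < s * N ^ m)%N ->
  (ds N n k + ds N n (s * N ^ m - 1 - k) = m * (N - 1) + (s - 1))%N.
Proof.
move=> N0; elim: m => [|m IH] n k s hmn /andP [s1 sN] hk.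
  rewrite expn0 muln1 in hk *.
  rewrite !ds_small //; lia.
case: n hmn => // n hmn /=.
set q := (k %/ N)%N; set r := (k %% N)%N.
have hkq := divn_eq k N; have hr := ltn_pmod k N0.
have hq : (q < s * N ^ m)%N by rewrite /q ltn_divLR // -mulnA -expnSr.
have e : (s * N ^ m.+1 - 1 - k = (s * N ^ m - 1 - q) * N + (N - 1 - r))%N.
  rewrite expnSr mulnA mulnBl mulnBl mul1n. rewrite -/q -/r in hkq.
  have : (q.+1 * N <= s * N ^ m * N)%N by rewrite leq_mul2r hq orbT.
  rewrite mulSn; lia.
rewrite e modnMDl divnMDl // (modn_small (m:=(N - 1 - r)%N)); last lia.
rewrite (divn_small (m:=(N - 1 - r)%N)); last lia.
rewrite addn0.
have := IH n q s hmn; rewrite s1 sN => /(_ isT hq); lia.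
Qed.

Definition Fk {R : realFieldType} (k v : nat) : R := if (v < k)%N then 1 else -1.
Definition Pk {R : realFieldType} (Jt : R) N n k :=
  \sum_(0 <= v < (N ^ n)%N) \sum_(0 <= w < (N ^ n)%N | (v < w)%N)
     Jc Jt N (hdist N n v w) * Fk k v * Fk k w.
Definition Qk {R : realFieldType} N n k : R := \sum_(0 <= v < (N ^ n)%N) Fk k v.

Lemma Ham_nat {R : realFieldType} (Jt h : R) N n k :
  Ham N n Jt h (@gamma R N n k) = - (1 / 2) * Pk Jt N n k - h / 2 * Qk N n k.
Proof.
rewrite /Ham /Pk /Qk; congr (- _ * _ - _ * _).
  rewrite big_mkord; apply: eq_bigr => v _; rewrite big_mkord; apply: eq_bigr => w _.
  by [].
by rewrite big_mkord.
Qed.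

Lemma sum_pick {R : realFieldType} M k (X : nat -> R) : (k < M)%N ->
  \sum_(0 <= v < M) (if v == k then X v else 0) = X k.
Proof.
move=> hk; rewrite (bigD1_seq k) ?mem_index_iota ?iota_uniq //= eqxx big1 ?addr0 //.
by move=> i /negbTE ->.
Qed.

Lemma sum_prefix {R : realFieldType} M k (Y : nat -> R) : (k <= M)%N ->
  \sum_(0 <= v < M) (if (v < k)%N then Y v else 0) = \sum_(0 <= v < k) Y v.
Proof.
move=> hk; rewrite [RHS](big_nat_widen 0 k M) // [RHS]big_mkcond.
by apply: eq_bigr => v _.
Qed.

Lemma sum_suffix {R : realFieldType} M k (G : nat -> R) : (k < M)%N ->
  \sum_(0 <= w < M | (k < w)%N) G w = \sum_(k.+1 <= w < M) G w.
Proof.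
move=> hk; rewrite (big_cat_nat _ (n := k.+1)) //= big_nat_cond big1 ?add0r.
  rewrite big_nat_cond [RHS]big_nat_cond; apply: eq_bigl => w.
  by rewrite andbT; case/boolP: (k.+1 <= w < M)%N => //= /andP [-> _].
by move=> w /andP [/andP [_ h] h']; move: h h'; rewrite ltnS leqNgt => /negbTE ->.
Qed.

Lemma Q_step {R : realFieldType} N n k : (k < N ^ n)%N ->
  @Qk R N n k.+1 - Qk N n k = 2.
Proof.
move=> hk; rewrite /Qk -sumrB.
rewrite (eq_big_nat _ _ (F2 := fun v => if v == k then 2 else 0)).
  by rewrite (@sum_pick R _ k (fun _ => 2)).
move=> v _; rewrite /Fk ltnS; case: (ltngtP v k) => //= _; rewrite ?subrr //.
by rewrite opprK.
Qed.

Lemma pt {R : realFieldType} (x : R) k v w : (v < w)%N ->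
  x * Fk k.+1 v * Fk k.+1 w - x * Fk k v * Fk k w =
  (if v == k then -2 * x else 0) + (if w == k then 2 * x else 0).
Proof.
move=> hvw; rewrite /Fk !ltnS.
case: (ltngtP v k) => [h1|h1|h1]; case: (ltngtP w k) => [h2|h2|h2];
  rewrite ?eqxx /=; try (exfalso; lia); ring.
Qed.

Lemma P_step {R : realFieldType} (Jt : R) N n k : (k < N ^ n)%N ->
  Pk Jt N n k.+1 - Pk Jt N n k = 2 * Asum Jt N n k - 2 * Bsum Jt N n k.
Proof.
move=> hk; rewrite /Pk -sumrB.
set M := (N ^ n)%N.
transitivity (\sum_(0 <= v < M) \sum_(0 <= w < M | (v < w)%N)
  ((if v == k then -2 * Jc Jt N (hdist N n v w) else 0) +
   (if w == k then 2 * Jc Jt N (hdist N n v w) else 0))).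
  apply: eq_bigr => v _; rewrite -sumrB; apply: eq_bigr => w hvw; exact: pt.
rewrite (eq_bigr (fun v => \sum_(0 <= w < M | (v < w)%N)
    (if v == k then -2 * Jc Jt N (hdist N n v w) else 0) +
  \sum_(0 <= w < M | (v < w)%N)
    (if w == k then 2 * Jc Jt N (hdist N n v w) else 0))); last first.
  by move=> v _; rewrite big_split.
rewrite big_split /=.
have t1 : forall v, \sum_(0 <= w < M | (v < w)%N)
    (if v == k then -2 * Jc Jt N (hdist N n v w) else 0) =
  if v == k then \sum_(0 <= w < M | (k < w)%N) (-2 * Jc Jt N (hdist N n k w)) else 0.
  move=> v; have [->|_] := eqVneq v k => //; by rewrite big1.
have t2 : forall v, \sum_(0 <= w < M | (v < w)%N)
    (if w == k then 2 * Jc Jt N (hdist N n v w) else 0) =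
  if (v < k)%N then 2 * Jc Jt N (hdist N n v k) else 0.
  move=> v; rewrite big_mkcond /=.
  rewrite (eq_bigr (fun w => if w == k then (if (v < k)%N then 2 * Jc Jt N (hdist N n v k) else 0) else 0)).
    by rewrite (@sum_pick R M k (fun _ => if (v < k)%N then 2 * Jc Jt N (hdist N n v k) else 0)).
  move=> w _; have [->|_] := eqVneq w k => //; by case: ifP.
rewrite (eq_bigr _ (fun v _ => t1 v)) (eq_bigr _ (fun v _ => t2 v)).
rewrite (@sum_pick R M k (fun _ => \sum_(0 <= w < M | (k < w)%N) (-2 * Jc Jt N (hdist N n k w)))) //.
rewrite (@sum_prefix R M k _ (ltnW hk)) (@sum_suffix R M k _ hk).
rewrite /Asum /Bsum [2 * \sum_(0 <= _ < k) _]mulr_sumr [2 * \sum_(k.+1 <= _ < _) _]mulr_sumr.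
rewrite addrC -sumrN; congr (_ + _); apply: eq_bigr => w _; by rewrite mulNr.
Qed.

Theorem lemma4p4 (R : realFieldType) (N n : nat) (Jt : R) (m s K : nat) :
  (2 <= N)%N -> (1 <= n)%N -> 0 < Jt ->
  (m <= n - 1)%N -> (1 <= s)%N -> (s <= N)%N ->
  (K <= s * N ^ m)%N ->
  Ham N n Jt (hms Jt N n m s) (@gamma R N n K) =
  Ham N n Jt (hms Jt N n m s) (@gamma R N n (s * N ^ m - K)).
Proof.
move=> N2 n1 Jt0 hm s1 sN hK.
have N0 : (0 < N)%N by lia.
have NR : N%:R != 0 :> R by rewrite pnatr_eq0 -lt0n.
set h := hms Jt N n m s.
set L := (s * N ^ m)%N.
pose f k := Ham N n Jt h (@gamma R N n k).
have hLM : (L <= N ^ n)%N.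
  apply: (@leq_trans (N * N ^ m)%N); first by rewrite leq_mul2r sN orbT.
  by rewrite -expnS leq_pexp2l //; lia.
have step : forall k, (k < N ^ n)%N ->
    f k.+1 - f k = Bsum Jt N n k - Asum Jt N n k - h.
  move=> k hk; rewrite /f !Ham_nat.
  rewrite (_ : Qk N n k.+1 = Qk N n k + 2); last by rewrite -(@Q_step R N n k hk) addrC subrK.
  rewrite (_ : Pk Jt N n k.+1 = Pk Jt N n k + (2 * Asum Jt N n k - 2 * Bsum Jt N n k)); last first.
    by rewrite -(@P_step R Jt N n k hk) addrC subrK.
  by field.
have sym : forall k, (k < L)%N ->
    (Bsum Jt N n k - Asum Jt N n k - h) +
    (Bsum Jt N n (L - 1 - k) - Asum Jt N n (L - 1 - k) - h) = 0.
  move=> k hk.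
  have hk1 : (k < N ^ n)%N by lia.
  have hk2 : (L - 1 - k < N ^ n)%N by lia.
  have eB : forall j, (j < N ^ n)%N -> Bsum Jt N n j = (n * (N - 1))%:R * (Jt / N%:R) - Asum Jt N n j.
    by move=> j hj; rewrite -(@AB_sum R Jt N n j N0 hj) [_ + Bsum _ _ _ _]addrC addrK.
  rewrite !eB // !A_ds //.
  have e := @ds_sym N m N0 n k s ltac:(lia) ltac:(lia) hk.
  have eR : (ds N n k)%:R + (ds N n (L - 1 - k))%:R = (m * (N - 1) + (s - 1))%:R :> R.
    by rewrite -natrD e.
  move: eR; rewrite natrD !natrM !natrB ?N0 ?s1 //.
  move=> eR.
  rewrite (_ : (ds N n (L - 1 - k))%:R = m%:R * (N%:R - 1%:R) + (s%:R - 1%:R) - (ds N n k)%:R :> R); last first.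
    by rewrite -eR [(ds N n k)%:R + _]addrC addrK.
  rewrite /h /hms; field; exact NR.
have ind : forall K, (K <= L)%N -> f K - f 0%N = f (L - K)%N - f L.
  elim => [|K' IH] hK'; first by rewrite subn0 !subrr.
  have IH' := IH (ltnW hK').
  have e1 := step K' ltac:(lia).
  have e2 := step (L - 1 - K')%N ltac:(lia).
  have eq1 : ((L - 1 - K').+1 = L - K')%N by lia.
  rewrite eq1 in e2.
  have sy := sym K' hK'.
  have eq2 : (L - K'.+1 = L - 1 - K')%N by lia.
  rewrite eq2; lra.
have hL := ind L (leqnn L); rewrite subnn in hL.
have hKK := ind K hK.
rewrite -/(f K) -/(f (L - K)%N); lra.
Qed.
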